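(* Let $T$ be a rooted tree and $v$ a vertex of $T$. A vertex $u$ is the level successor of $v$ if and only if $u$ is the first vertex appearing after the last occurrence of $v$ in the Euler tour of $T$ such that $\mathrm{level}(u)\ge \mathrm{level}(v)$.
   Context: The level of the root $r$ is $0$, and each other vertex has level one more than its parent. The level successor of $v$ is the next vertex after $v$ in preorder that lies on the same level as $v$. The Euler tour of $T$ is the sequence of $2n-1$ vertices (where $n$ is the number of vertices) obtained by traversing $T$ depth-first starting and ending at the root, each tree edge traversed once downward and once upward, listing the current vertex initially and after every step. *)

(* Defs.v *)
From mathcomp Require Import all_boot.
Set Implicit Arguments. Unset Strict Implicit. Unset Printing Implicit Defensive.

(* Vertices are identified by their address: the sequence
   of child indices on the path from the root (the root is [::]). *)
Inductive tree := Node of seq tree.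

Definition vertex := seq nat.

Definition level (v : vertex) : nat := size v.

Fixpoint preorder (t : tree) : seq vertex :=
  let: Node ts := t in
  [::] :: (fix aux (i : nat) (ts : seq tree) : seq vertex :=
             match ts with
             | [::] => [::]
             | c :: cs => map (cons i) (preorder c) ++ aux i.+1 cs
             end) 0 ts.

(* Euler tour: start at the root, go down into each child subtree in order,
   come back up; the current vertex is listed initially and after each step.
   A tree with n vertices yields a sequence of length 2n-1. *)
Fixpoint euler (t : tree) : seq vertex :=
  let: Node ts := t in
  [::] :: (fix aux (i : nat) (ts : seq tree) : seq vertex :=
             match ts with
             | [::] => [::]
             | c :: cs => map (cons i) (euler c) ++ [:: [::]] ++ aux i.+1 cs
             end) 0 ts.

Definition level_successor (T : tree) (v u : vertex) : Prop :=
  let P := preorder T in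
  exists i j, i < j /\ j < size P /\ nth [::] P i = v /\ nth [::] P j = u /\
    level u = level v /\
    forall k, i < k -> k < j -> level (nth [::] P k) != level v.

Definition first_after_last_geq (T : tree) (v u : vertex) : Prop :=
  let E := euler T in
  exists i j, i < j /\ j < size E /\ nth [::] E i = v /\
    (forall k, i < k -> k < size E -> nth [::] E k != v) /\
    nth [::] E j = u /\ level v <= level u /\
    (forall k, i < k -> k < j -> level (nth [::] E k) < level v).

(* Main.v *)
Require Import Defs.
From mathcomp Require Import all_boot zify.
Set Implicit Arguments. Unset Strict Implicit.

Fixpoint paux (i : nat) (ts : seq tree) : seq vertex :=
  match ts with [::] => [::] | c :: cs => map (cons i) (preorder c) ++ paux i.+1 cs end.
Fixpoint eaux (i : nat) (ts : seq tree) : seq vertex :=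
  match ts with [::] => [::] | c :: cs => map (cons i) (euler c) ++ [:: [::]] ++ eaux i.+1 cs end.
Lemma preE ts : preorder (Node ts) = [::] :: paux 0 ts. Proof. by []. Qed.
Lemma eulE ts : euler (Node ts) = [::] :: eaux 0 ts. Proof. by []. Qed.

Fixpoint allT (P : tree -> Prop) (ts : seq tree) : Prop :=
  match ts with [::] => True | c :: cs => P c /\ allT P cs end.
Definition tree_ind2 (P : tree -> Prop) (H : forall ts, allT P ts -> P (Node ts)) : forall t, P t :=
  fix F t := match t with Node ts => H ts ((fix G ts : allT P ts :=
     match ts return allT P ts with [::] => I | c :: cs => conj (F c) (G cs) end) ts) end.

Lemma paux_head j ts x : x \in paux j ts -> exists a y, x = a :: y /\ j <= a.
Proof.
elim: ts j => [|c cs IH] j //=; rewrite mem_cat => /orP[/mapP[y _ ->]|/IH[a [y [-> H]]]].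
  by exists j, y.
by exists a, y; split => //; apply: ltnW.
Qed.

Lemma eaux_head j ts x : x \in eaux j ts -> x = [::] \/ exists a y, x = a :: y /\ j <= a.
Proof.
elim: ts j => [|c cs IH] j //=; rewrite mem_cat => /orP[/mapP[y _ ->]|].
  by right; exists j, y.
rewrite inE => /orP[/eqP->|/IH[->|[a [y [-> H]]]]]; first by left.
  by left.
by right; exists a, y; split => //; apply: ltnW.
Qed.

Lemma pre_sub_eul : forall t x, x \in preorder t -> x \in euler t.
Proof.
apply: tree_ind2 => ts IH x; rewrite preE eulE !inE => /orP[->//|H]; apply/orP; right.
elim: ts IH 0 H => [|c cs IHcs] //= [Hc Hcs] j.
rewrite !mem_cat => /orP[/mapP[y Hy ->]|H].
  by rewrite (map_f (cons j) (Hc _ Hy)).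
by rewrite inE (IHcs Hcs j.+1 H) !orbT.
Qed.

Lemma cons_inj (j : nat) : injective (cons j).
Proof. by move=> a b []. Qed.

Lemma uniq_pre : forall t, uniq (preorder t).
Proof.
apply: tree_ind2 => ts IH; rewrite preE /=.
have -> : [::] \in paux 0 ts = false.
  by apply/negP => /paux_head[a [y [E _]]].
rewrite /=; elim: ts IH 0 => [|c cs IHcs] //= [Hc Hcs] j.
rewrite cat_uniq (map_inj_uniq (@cons_inj j)) Hc (IHcs Hcs) andbT /=.
apply/hasPn => x /paux_head[a [y [-> Ha]]]; apply/mapP => -[z _ [E _]]; lia.
Qed.

Fixpoint ofirst (p : pred vertex) (s : seq vertex) : option vertex :=
  match s with [::] => None | x :: s' => if p x then Some x else ofirst p s' end.
Definition ocat (o1 o2 : option vertex) := if o1 is Some x then Some x else o2.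
Lemma ocat_None o : ocat o None = o. Proof. by case: o. Qed.
Fixpoint nextp (p : pred vertex) (v : vertex) (s : seq vertex) : option vertex :=
  match s with [::] => None
  | x :: s' => if v \in s' then nextp p v s' else if x == v then ofirst p s' else None end.

Lemma ofirst_cat p s1 s2 : ofirst p (s1 ++ s2) = ocat (ofirst p s1) (ofirst p s2).
Proof. by elim: s1 => //= x s IH; case: (p x). Qed.
Lemma ofirst_map p j s : ofirst p (map (cons j) s) = omap (cons j) (ofirst (fun w => p (j :: w)) s).
Proof. by elim: s => //= x s IH; case: (p (j :: x)). Qed.
Lemma ofirst_none p s : (forall x, x \in s -> ~~ p x) -> ofirst p s = None.
Proof.
elim: s => //= x s IH H; rewrite (negbTE (H x (mem_head _ _))) IH // => y Hy.
by apply: H; rewrite inE Hy orbT.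
Qed.

Lemma nextp_cat_in2 p v s1 s2 : v \in s2 -> nextp p v (s1 ++ s2) = nextp p v s2.
Proof. by move=> H; elim: s1 => //= x s IH; rewrite mem_cat H orbT. Qed.
Lemma nextp_cat_in1 p v s1 s2 : v \in s1 -> v \notin s2 ->
  nextp p v (s1 ++ s2) = ocat (nextp p v s1) (ofirst p s2).
Proof.
move=> H1 H2; elim: s1 H1 => //= x s IH; rewrite mem_cat (negbTE H2) orbF inE.
case Hs: (v \in s); first by move=> _; apply: IH.
by rewrite orbF eq_sym => ->; rewrite ofirst_cat.
Qed.
Lemma nextp_map p j v s : nextp p (j :: v) (map (cons j) s) =
  omap (cons j) (nextp (fun w => p (j :: w)) v s).
Proof.
elim: s => //= x s IH; rewrite (mem_map (@cons_inj j)) (inj_eq (@cons_inj j)).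
by case: (v \in s) => //; case: (x == v) => //; rewrite ofirst_map.
Qed.
Lemma nextp_last p v s : nextp p v (rcons s v) = None.
Proof. by rewrite -cats1 nextp_cat_in2 ?mem_head //= eqxx. Qed.

Lemma eaux_last j ts : eaux j ts = [::] \/ exists s, eaux j ts = rcons s [::].
Proof.
elim: ts j => [|c cs IH] j /=; first by left.
right; case: (IH j.+1) => [->|[s ->]].
  by exists (map (cons j) (euler c)); rewrite cats1.
by exists (map (cons j) (euler c) ++ [::] :: s); rewrite rcons_cat.
Qed.

Lemma paux_sub j ts x : x \in paux j ts -> x \in eaux j ts.
Proof.
elim: ts j => [|c cs IHcs] //= j.
rewrite !mem_cat => /orP[/mapP[y Hy ->]|H].
  by rewrite (map_f (cons j) (pre_sub_eul Hy)).
by rewrite inE (IHcs j.+1 H) !orbT.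
Qed.

Lemma first_lvl : forall t m,
  ofirst (fun w => size w == m) (preorder t) = ofirst (fun w => m <= size w) (euler t).
Proof.
apply: tree_ind2 => ts IH [|m]; rewrite preE eulE //=.
elim: ts IH 0 => [|c cs IHcs] //= [Hc Hcs] j.
rewrite !ofirst_cat !ofirst_map /=; congr ocat; last exact: IHcs.
by congr omap; exact: Hc.
Qed.

Lemma first_forest ts j m :
  ofirst (fun w => size w == m.+1) (paux j ts) = ofirst (fun w => m.+1 <= size w) (eaux j ts).
Proof.
elim: ts j => [|c cs IHcs] //= j.
rewrite !ofirst_cat !ofirst_map /=; congr ocat; last exact: IHcs.
by congr omap; exact: first_lvl.
Qed.

Lemma main_nextp : forall t v, v \in preorder t ->
  nextp (fun w => size w == size v) v (preorder t) =
  nextp (fun w => size v <= size w) v (euler t).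
Proof.
apply: tree_ind2 => ts IH v; rewrite preE eulE inE => /orP[/eqP->|Hv].
  have Hn : [::] \in paux 0 ts = false by apply/negP => /paux_head[a [y [E _]]].
  rewrite /= Hn ofirst_none; last by move=> x /paux_head[a [y [-> _]]].
  case: (eaux_last 0 ts) => [->|[s ->]] //=.
  by rewrite mem_rcons mem_head nextp_last.
rewrite /= Hv (paux_sub Hv).
elim: ts IH 0 Hv => [|c cs IHcs] //= [Hc Hcs] j.
rewrite mem_cat => /orP[Hm|Hr]; last first.
  rewrite nextp_cat_in2 // -cat1s catA nextp_cat_in2; last exact: paux_sub.
  exact: IHcs.
case/mapP: Hm => v' Hv' ->.
rewrite (_ : _ ++ [::] :: eaux j.+1 cs = (map (cons j) (euler c) ++ [:: [::]]) ++ eaux j.+1 cs); last by rewrite -catA.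
rewrite nextp_cat_in1 ?(map_f (cons j) Hv') //; last first.
  by apply/negP => /paux_head[a [y [[E _] H]]]; lia.
rewrite nextp_cat_in1; last first.
- by apply/negP => /eaux_head[//|[a [y [[E _] H]]]]; lia.
- by rewrite mem_cat (map_f (cons j) (pre_sub_eul Hv')).
rewrite nextp_cat_in1 ?(map_f (cons j) (pre_sub_eul Hv')) //= ocat_None.
rewrite !nextp_map /=.
congr ocat; last exact: first_forest.
by congr omap; exact: Hc.
Qed.

Lemma ofirst_nth p s u : ofirst p s = Some u <->
  exists j, j < size s /\ nth [::] s j = u /\ p u /\
    forall k, k < j -> ~~ p (nth [::] s k).
Proof.
elim: s => [|x s IH] /=; first by split => // -[j []].
case Hx: (p x).
  split => [[<-]|[[|j] [Hj [E [Hu Hk]]]]]; first by exists 0.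
    by rewrite /= in E; rewrite E.
  by have := Hk 0 isT; rewrite /= Hx.
split => [/IH[j [Hj [E [Hu Hk]]]]|[[|j] [Hj [E [Hu Hk]]]]].
- exists j.+1; do 3!split => //; case => [|k] //=; first by rewrite Hx.
  by move=> Hkj; apply: Hk.
- by rewrite /= in E; rewrite -E Hx in Hu.
- apply/IH; exists j; do 3!split => //.
  by move=> k Hkj; apply: (Hk k.+1).
Qed.

Lemma nextp_nth p v s u : nextp p v s = Some u <->
  exists i j, i < j /\ j < size s /\ nth [::] s i = v /\
    (forall k, i < k -> k < size s -> nth [::] s k != v) /\
    nth [::] s j = u /\ p u /\ (forall k, i < k -> k < j -> ~~ p (nth [::] s k)).
Proof.
elim: s => [|x s IH] /=; first by split => // -[i [j [_ []]]].
case Hv: (v \in s).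
  split => [/IH[i [j [Hij [Hj [Ei [Hl [Ej [Hu Hk]]]]]]]]|].
    exists i.+1, j.+1; do 2!split => //; split => //; split.
      by move=> [|k] //= H1 H2; apply: Hl.
    do 2!split => //; by move=> [|k] //= H1 H2; apply: Hk.
  move=> [[|i] [[|j] [Hij [Hj [Ei [Hl [Ej [Hu Hk]]]]]]]] //.
    exfalso; move: Ei => /= Ei; subst v.
    have := Hl (index x s).+1 isT; rewrite /= ltnS index_mem Hv nth_index //.
    by rewrite eqxx => /(_ isT).
  apply/IH; exists i, j; do 2!split => //; split => //; split.
    by move=> k H1 H2; apply: (Hl k.+1).
  do 2!split => //; by move=> k H1 H2; apply: (Hk k.+1).
case Hx: (x == v).
  split => [/ofirst_nth[j [Hj [Ej [Hu Hk]]]]|].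
    exists 0, j.+1; do 2!split => //; split; first exact/eqP.
    split.
      move=> [|k] //= _ Hk'; apply/negP => /eqP E.
      by move: Hv; rewrite -E mem_nth.
    do 2!split => //; by move=> [|k] //= _ Hk'; apply: Hk.
  move=> [[|i] [[|j] [Hij [Hj [Ei [Hl [Ej [Hu Hk]]]]]]]] //.
    apply/ofirst_nth; exists j; do 3!split => //.
    by move=> k Hk'; apply: (Hk k.+1).
  move: Ei => /= Ei; subst v; have : i < size s by lia.
  by move/(mem_nth [::]); rewrite Hv.
split => // -[[|i] [j [Hij [Hj [Ei _]]]]].
  by move: Ei => /= Ei; rewrite Ei eqxx in Hx.
move: Ei => /= Ei; subst v; have : i < size s by lia.
  by move/(mem_nth [::]); rewrite Hv.
Qed.

Theorem mainTheorem6 (T : tree) (v u : vertex) :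
  v \in preorder T ->
  (level_successor T v u <-> first_after_last_geq T v u).
Proof.
move=> Hv; rewrite /level_successor /first_after_last_geq /level.
have HU := uniq_pre T.
split.
- case=> i [j [Hij [Hj [Ei [Ej [Hl Hk]]]]]].
  have : nextp (fun w => size w == size v) v (preorder T) = Some u.
    apply/nextp_nth; exists i, j; do 3!split => //; split.
      move=> k H1 H2; rewrite -Ei nth_uniq ?(gtn_eqF H1) //; exact: ltn_trans Hij Hj.
    by do 2!split => //; apply/eqP.
  rewrite main_nextp // => /nextp_nth[i' [j' [H1 [H2 [H3 [H4 [H5 [H6 H7]]]]]]]].
  exists i', j'; do 6!split => //.
  by move=> k K1 K2; rewrite ltnNge; apply: H7.
- case=> i [j [Hij [Hj [Ei [Hl [Ej [Hu Hk]]]]]]].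
  have : nextp (fun w => size v <= size w) v (euler T) = Some u.
    apply/nextp_nth; exists i, j; do 6!split => //.
    by move=> k K1 K2; rewrite -ltnNge; apply: Hk.
  rewrite -main_nextp // => /nextp_nth[i' [j' [H1 [H2 [H3 [H4 [H5 [H6 H7]]]]]]]].
  exists i', j'; do 4!split => //; split; first exact/eqP.
  exact: H7.
Qed.
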